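(* Let $H$ be a graph on $n$ vertices and let $G=K_{1}\vee H$, where $V(K_1)=\{u\}$. Then $\uparrow^{2}G$ has Laplacian perfect state transfer at time $\frac{\pi}{2}$ between $(0,u)$ and $(1,u)$ if and only if $n$ is odd.
   Context: All graphs are simple, undirected and unweighted. The join $K_1\vee H$ is obtained from $H$ by adding a new vertex $u$ adjacent to all vertices of $H$. The blow-up $\uparrow^{2}G$ has vertex set $\mathbb{Z}_2\times V(G)$, with $(l,a)\sim(m,b)$ iff $a\sim b$ in $G$. A graph with Laplacian $L=D-A$ has Laplacian perfect state transfer between $a,b$ at time $\tau$ if $\exp(i\tau L)\mathbf{e}_a=\gamma\mathbf{e}_b$ for some $\gamma\in\mathbb{C}$. *)

(* Defs.v *)
From HB Require Import structures.
From mathcomp Require Import all_boot all_order all_algebra.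
From mathcomp Require Import all_classical all_reals all_analysis.
From mathcomp Require Import complex.

Set Implicit Arguments.
Unset Strict Implicit.
Unset Printing Implicit Defensive.

Import Order.TTheory GRing.Theory Num.Theory.
Local Open Scope ring_scope.

Definition simple_graph (T : finType) (e : rel T) : Prop :=
  symmetric e /\ irreflexive e.

(* The join K_1 \/ H : new vertex [None] (= u) adjacent to every vertex
   [Some a] of H. *)
Definition join_K1 (T : finType) (e : rel T) : rel (option T) :=
  fun x y =>
    match x, y with
    | None, None => false
    | None, Some _ => true
    | Some _, None => true
    | Some a, Some b => e a b
    end.

Definition blowup2 (T : finType) (e : rel T) : rel ('I_2 * T) :=
  fun p q => e p.2 q.2.

(* Laplacian L = D - A, as a real matrix indexed by 'I_#|T|
   (vertex v corresponds to index enum_rank v). *)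
Definition laplacian (R : realType) (T : finType) (e : rel T) : 'M[R]_#|T| :=
  \matrix_(i, j)
    ((i == j)%:R * #|[set y | e (enum_val i) y]|%:R
     - (e (enum_val i) (enum_val j))%:R).

(* exp(i t M) = cos(t M) + i sin(t M), entrywise, via the power series
   sum_k (i t)^k M^k / k!, split into its real (even k) and
   imaginary (odd k) parts. *)
Definition mx_cos_entry (R : realType) (m : nat) (t : R) (M : 'M[R]_m)
    (i j : 'I_m) : R :=
  limn (fun N => \sum_(k < N)
          ((-1) ^+ k * t ^+ (2 * k) / ((2 * k)`!)%:R) * (M ^+ (2 * k)) i j).

Definition mx_sin_entry (R : realType) (m : nat) (t : R) (M : 'M[R]_m)
    (i j : 'I_m) : R :=
  limn (fun N => \sum_(k < N)
          ((-1) ^+ k * t ^+ (2 * k).+1 / ((2 * k).+1`!)%:R)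
            * (M ^+ (2 * k).+1) i j).

Definition expi_entry (R : realType) (m : nat) (t : R) (M : 'M[R]_m)
    (i j : 'I_m) : R[i] :=
  ((mx_cos_entry t M i j) +i* (mx_sin_entry t M i j))%C.

(* Laplacian perfect state transfer between a and b at time tau:
   exp(i tau L) e_a = gamma e_b for some complex gamma. *)
Definition laplacian_pst (R : realType) (T : finType) (e : rel T)
    (a b : T) (tau : R) : Prop :=
  exists gamma : R[i], forall x : T,
    expi_entry tau (laplacian R e) (enum_rank x) (enum_rank a)
    = gamma * (x == b)%:R.

(* Main.v *)
Require Import Defs.
From HB Require Import structures.
From mathcomp Require Import all_boot all_order all_algebra.
From mathcomp Require Import all_classical all_reals all_analysis.
From mathcomp Require Import complex.
From mathcomp Require Import ring lra.
Set Implicit Arguments.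
Unset Strict Implicit.
Import Order.TTheory GRing.Theory Num.Theory numFieldNormedType.Exports.
Local Open Scope ring_scope.

Lemma sum_option (R : nmodType) (I : finType) (F : option I -> R) :
  \sum_(b : option I) F b = F None + \sum_(i : I) F (Some i).
Proof.
rewrite (bigD1 None) //=; congr (_ + _).
rewrite (reindex_omap Some id) /=; last by move=> [j|].
by apply: eq_bigl => i; rewrite eqxx.
Qed.

Lemma lap_action (R : realType) (T : finType) (e : rel T) (w : T -> R) (x : T) :
  \sum_j laplacian R e (enum_rank x) j * w (enum_val j)
  = \sum_y (e x y)%:R * (w x - w y).
Proof.
rewrite (reindex enum_rank) /=; last first.
  by exists enum_val => y _; rewrite ?enum_rankK ?enum_valK.
under eq_bigr do rewrite !mxE !enum_rankK (inj_eq enum_rank_inj).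
under [RHS]eq_bigr do rewrite mulrBr.
under eq_bigr do rewrite mulrBl.
rewrite !sumrB; congr (_ - _).
rewrite (bigD1 x) //= eqxx mul1r big1 ?addr0; last first.
  by move=> y /negbTE; rewrite eq_sym => ->; rewrite !mul0r.
rewrite -mulr_suml; congr (_ * _).
rewrite -sum1_card natr_sum big_mkcond /=; apply: eq_bigr => y _.
by rewrite inE; case: (e x y).
Qed.

Lemma sumT (R : nmodType) n (F : 'I_2 * option 'I_n -> R) :
  \sum_y F y = \sum_(m < 2) (F (m, None) + \sum_(h < n) F (m, Some h)).
Proof.
rewrite (eq_bigr (fun p => F (p.1, p.2))); last by case.
rewrite -(pair_bigA _ (fun m b => F (m, b))) /=; apply: eq_bigr => m _; exact: sum_option.
Qed.

Definition w2 (R : realType) n (x : 'I_2 * option 'I_n) : R :=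
  if x.2 is None then n%:R else -1.
Definition w3 (R : realType) n (x : 'I_2 * option 'I_n) : R :=
  if x.2 is None then (if val x.1 == 0%N then 1 else -1) else 0.

Lemma eig2 (R : realType) n (H : rel 'I_n) x :
  \sum_y (blowup2 (join_K1 H) x y)%:R * (w2 R x - w2 R y)
  = (2 * (n%:R + 1)) * w2 R x.
Proof.
rewrite sumT !big_ord_recl big_ord0 addr0.
case: x => l [h|] /=; rewrite /blowup2 /w2 /=.
  rewrite !mul1r !big1 ?addr0; try by move=> i _; rewrite subrr mulr0.
  ring.
rewrite !mul0r !add0r.
under eq_bigr do rewrite mul1r.
rewrite sumr_const card_ord.
rewrite -mulr_natr. ring.
Qed.

Lemma eig3 (R : realType) n (H : rel 'I_n) x :
  \sum_y (blowup2 (join_K1 H) x y)%:R * (w3 R x - w3 R y)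
  = (2 * n%:R) * w3 R x.
Proof.
rewrite sumT !big_ord_recl big_ord0 addr0.
case: x => l [h|] /=; rewrite /blowup2 /w3 /=.
  rewrite !mul1r !big1 ?addr0; try by move=> i _; rewrite subrr mulr0.
  ring.
rewrite !mul0r !add0r.
under eq_bigr do rewrite mul1r subr0.
rewrite sumr_const card_ord.
rewrite -mulr_natr. ring.
Qed.

Definition fk (R : realType) n k (x : 'I_2 * option 'I_n) : R :=
  (2 * (n%:R + 1))^-1 * (0 ^+ k + (2 * (n%:R + 1)) ^+ k * w2 R x)
  + 2^-1 * ((2 * n%:R) ^+ k * w3 R x).

Lemma powL (R : realType) n (H : rel 'I_n) k x :
  (laplacian R (blowup2 (join_K1 H)) ^+ k)
     (enum_rank x) (enum_rank ((@Ordinal 2 0 isT), None)) = fk R k x.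
Proof.
have n1 : (n%:R + 1 : R) != 0 by rewrite -(natrD R n 1) pnatr_eq0 addn1.
elim: k x => [|k IH] x.
  rewrite expr0 mxE (inj_eq enum_rank_inj) /fk /w2 /w3 !expr0 !mul1r.
  case: x => [[[|[|l]] Hl] [h|]] //=.
  1-4: field; exact: n1.

rewrite (@exprS _ (laplacian R (blowup2 (join_K1 H)))).
rewrite -mulmxE mxE.
have IH' : forall j, (laplacian R (blowup2 (join_K1 H)) ^+ k) j
     (enum_rank ((@Ordinal 2 0 isT), None)) = fk R k (enum_val j).
  by move=> j; rewrite -IH enum_valK.
under eq_bigr do rewrite IH'.
rewrite lap_action.
have -> : \sum_y ((blowup2 (join_K1 H)) x y)%:R * (fk R k x - fk R k y)
  = (2 * (n%:R + 1))^-1 * (2 * (n%:R + 1)) ^+ k *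
       \sum_y (blowup2 (join_K1 H) x y)%:R * (w2 R x - w2 R y)
    + 2^-1 * (2 * n%:R) ^+ k *
       \sum_y (blowup2 (join_K1 H) x y)%:R * (w3 R x - w3 R y).
  rewrite !mulr_sumr -big_split /=; apply: eq_bigr => y _.
  rewrite /fk; ring.
rewrite eig2 eig3 /fk !exprS mul0r add0r; ring.
Qed.

Lemma cos_part (R : realType) m (t : R) (M : 'M[R]_m) i j (A B C lB lC : R) :
  (forall k, (M ^+ k) i j = A * 0 ^+ k + B * lB ^+ k + C * lC ^+ k) ->
  mx_cos_entry t M i j = A + B * cos (t * lB) + C * cos (t * lC).
Proof.
move=> hM; rewrite /mx_cos_entry.
have -> : (fun N => \sum_(k < N) ((-1) ^+ k * t ^+ (2 * k) / ((2 * k)`!)%:R)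
            * (M ^+ (2 * k)) i j)
  = (fun N => A * series (cos_coeff' (t * 0)) N + B * series (cos_coeff' (t * lB)) N
      + C * series (cos_coeff' (t * lC)) N).
  apply/funext => N; rewrite /series /= !big_mkord !mulr_sumr.
  rewrite -!big_split /=.
  apply: eq_bigr => k _; rewrite hM /cos_coeff' -mul2n !exprMn -!exprnP; ring.
apply/cvg_lim => //.
have h1 : ((fun N => A * series (cos_coeff' (t * 0)) N) @ \oo --> A * cos (t * 0))%classic.
  exact: (@cvgMl_tmp _ _ _ _ _ A _ (@cvg_cos_coeff' R (t * 0))).
have e0 : cos (t * 0) = 1 by rewrite mulr0 cos0.
rewrite e0 mulr1 in h1.
apply: cvgD; first apply: cvgD.
- exact: h1.
- exact: (@cvgMl_tmp _ _ _ _ _ _ _ (@cvg_cos_coeff' R _)).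
- exact: (@cvgMl_tmp _ _ _ _ _ _ _ (@cvg_cos_coeff' R _)).
Qed.

Lemma sin_part (R : realType) m (t : R) (M : 'M[R]_m) i j (A B C lB lC : R) :
  (forall k, (M ^+ k) i j = A * 0 ^+ k + B * lB ^+ k + C * lC ^+ k) ->
  mx_sin_entry t M i j = B * sin (t * lB) + C * sin (t * lC).
Proof.
move=> hM; rewrite /mx_sin_entry.
have -> : (fun N => \sum_(k < N) ((-1) ^+ k * t ^+ (2 * k).+1 / ((2 * k).+1`!)%:R)
            * (M ^+ (2 * k).+1) i j)
  = (fun N => B * series (sin_coeff' (t * lB)) N
      + C * series (sin_coeff' (t * lC)) N).
  apply/funext => N; rewrite /series /= !big_mkord !mulr_sumr -!big_split /=.
  apply: eq_bigr => k _; rewrite hM /sin_coeff' -mul2n !exprMn -!exprnP !exprS; ring.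
apply/cvg_lim => //.
apply: cvgD.
- exact: (@cvgMl_tmp _ _ _ _ _ _ _ (@cvg_sin_coeff' R _)).
- exact: (@cvgMl_tmp _ _ _ _ _ _ _ (@cvg_sin_coeff' R _)).
Qed.

Lemma cos_pim (R : realType) (m : nat) :
  cos ((pi : R) / 2 * (2 * m%:R)) = (-1) ^+ m.
Proof.
have -> : (pi : R) / 2 * (2 * m%:R) = 0 + pi *+ m by rewrite add0r -mulr_natr; field.
by rewrite (alternatingn (@cosDpi R)) cos0 mulr1.
Qed.

Lemma sin_pim (R : realType) (m : nat) :
  sin ((pi : R) / 2 * (2 * m%:R)) = 0.
Proof.
have -> : (pi : R) / 2 * (2 * m%:R) = 0 + pi *+ m by rewrite add0r -mulr_natr; field.
by rewrite (alternatingn (@sinDpi R)) sin0 mulr0.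
Qed.

Lemma entries (R : realType) n (H : rel 'I_n) x :
  let L := laplacian R (blowup2 (join_K1 H)) in
  let a := ((@Ordinal 2 0 isT), None) in
  mx_cos_entry (pi / 2) L (enum_rank x) (enum_rank a)
    = (2 * (n%:R + 1))^-1 + (2 * (n%:R + 1))^-1 * w2 R x * (-1) ^+ n.+1
      + 2^-1 * w3 R x * (-1) ^+ n
  /\ mx_sin_entry (pi / 2) L (enum_rank x) (enum_rank a) = 0.
Proof.
move=> L a.
have hk : forall k, (L ^+ k) (enum_rank x) (enum_rank a) =
   (2 * (n%:R + 1))^-1 * 0 ^+ k + (2 * (n%:R + 1))^-1 * w2 R x * (2 * (n%:R + 1)) ^+ k
   + 2^-1 * w3 R x * (2 * n%:R) ^+ k.
  move=> k; rewrite /L /a powL /fk; ring.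
split.
  by rewrite (cos_part _ hk) natr1 !cos_pim.
by rewrite (sin_part _ hk) natr1 !sin_pim !mulr0 addr0.
Qed.

Theorem corollary10 (R : realType) (n : nat) (H : rel 'I_n) :
  simple_graph H ->
  (laplacian_pst (blowup2 (join_K1 H))
     ((@Ordinal 2 0 isT), None) ((@Ordinal 2 1 isT), None) (pi / 2 : R)
   <-> odd n).
Proof.
move=> _; have n1 : (n%:R + 1 : R) != 0 by rewrite -(natrD R n 1) pnatr_eq0 addn1.
split.
  case=> g hg.
  have := hg ((@Ordinal 2 0 isT), None).
  rewrite /expi_entry; have [-> _] := @entries R n H ((@Ordinal 2 0 isT), None).
  rewrite /w2 /w3 /= mulr0 => /(congr1 (fun z : R[i] => let: (a +i* _)%C := z in a)) /=.
  rewrite exprS -signr_odd.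
  case: (odd n) => //=.
  rewrite expr0 => h.
  have : (n%:R + 1 : R)^-1 = 0.
    by rewrite -h; field.
  by move/eqP; rewrite invr_eq0 (negbTE n1).
move=> hodd; exists 1 => x.
rewrite /expi_entry; have [-> ->] := @entries R n H x.
rewrite exprS -signr_odd hodd expr1.
case: x => [[[|[|l]] Hl] [h|]] //=; rewrite /w2 /w3 /=.
all: rewrite mul1r; congr (_ +i* _)%C.
all: by field; rewrite ?n1.
Qed.
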